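(* Let $q$ be a prime power, $n\ge 2$ and $1\le i\le n$. Every root of $s_{n,i}(t)$ in an algebraic closure of $\mathbb{F}_q$ lies in $\mathbb{F}_{q^k}$ for some integer $k$ with $n-i+1\le k\le n$.
   Context: For a prime power $q$ and integers $n\ge 1$, $0\le i\le n$, the $i$-th $(n,q)$-elementary symmetric polynomial is $s_{n,i}(t)=\sum_{0\le j_1<j_2<\dots<j_i\le n-1} t^{q^{j_1}+q^{j_2}+\dots+q^{j_i}}\in\mathbb{F}_p[t]$ (where $p$ is the characteristic of $\mathbb{F}_q$). By convention $s_{n,0}(t)=1$. *)

(* Defs.v *)
From mathcomp Require Import all_boot all_order all_algebra.
Set Implicit Arguments. Unset Strict Implicit. Unset Printing Implicit Defensive.
Import GRing.Theory.
Local Open Scope ring_scope.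

(* Index sets
   {j_1 < ... < j_i} are the i-element subsets S of 'I_n.  Since all its
   coefficients are (sums of) 1, over a ring of characteristic p this is the
   image of the polynomial of F_p[t] from the paper. *)
Definition qsym (R : nzRingType) (q n i : nat) : {poly R} :=
  \sum_(S : {set 'I_n} | #|S| == i) 'X^(\sum_(j in S) q ^ (val j))%N.

(* Main.v *)
From HB Require Import structures.
Require Import Defs.
From mathcomp Require Import all_boot all_order all_algebra all_field.
Set Implicit Arguments. Unset Strict Implicit. Unset Printing Implicit Defensive.
Import GRing.Theory.
Local Open Scope ring_scope.

Section Frob.
Variables (L : fieldType) (q : nat).
Hypothesis hq : (GRing.pchar L).-nat q.

Definition frq (x : L) := x ^+ q.

Lemma frq_nmod : nmod_morphism frq.
Proof. by split=> [|x y]; rewrite /frq ?expr0n ?(exprDn_pchar _ _ hq) //; case: q hq. Qed.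

Lemma frq_monoid : monoid_morphism frq.
Proof. by split=> [|x y]; rewrite /frq ?expr1n ?exprMn. Qed.

HB.instance Definition _ := GRing.isNmodMorphism.Build L L frq frq_nmod.
HB.instance Definition _ := GRing.isMonoidMorphism.Build L L frq frq_monoid.

Lemma frq_inj x : frq x = 0 -> x = 0.
Proof.
have q0 : (0 < q)%N by case: q hq.
by rewrite /frq => /eqP; rewrite expf_eq0 => /andP[_ /eqP].
Qed.

Variable a : L.
Definition P m : {poly L} := \prod_(0 <= j < m) ('X - (a ^+ (q ^ j))%:P).
Definition Q m : {poly L} := \prod_(0 <= j < m) ('X - (a ^+ (q ^ j.+1))%:P).

Lemma P_S m : P m.+1 = ('X - a%:P) * Q m.
Proof. by rewrite /P big_nat_recl // expn0 expr1. Qed.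

Lemma Q_S m : Q m.+1 = Q m * ('X - (a ^+ (q ^ m.+1))%:P).
Proof. by rewrite /Q big_nat_recr. Qed.

Lemma P_map m : map_poly frq (P m) = Q m.
Proof.
rewrite /P rmorph_prod; apply: eq_bigr => j _.
by rewrite /= map_polyXsubC; congr (_ - _%:P); rewrite /= /frq -exprM expnSr.
Qed.

Lemma P_monic_coef m : (P m)`_m = 1.
Proof.
have := monic_prod_XsubC (index_iota 0 m) xpredT (fun j => a ^+ (q ^ j)).
rewrite -/(P m) => /monicP <-.
by rewrite lead_coefE /P size_prod_XsubC size_iota subn0.
Qed.

Lemma key i m : (1 <= i <= m)%N -> (P m)`_(m - i) = 0 ->
  exists k : nat, (m - i + 1 <= k <= m)%N /\ a ^+ (q ^ k) = a.
Proof.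
elim: i m => [|i IH] m; first by case/andP.
move=> /andP[_ im].
case: m im => [//|m] im.
rewrite subSS => c0.
have c1 : frq ((P m.+1)`_(m - i)) = 0 by rewrite c0 rmorph0.
rewrite -coef_map P_map Q_S in c1.
rewrite P_S in c0.
move: c0 c1; rewrite mulrBl mulrBr !coefB coefXM coefMX coefCM coefMC.
move/subr0_eq => c0 /subr0_eq c1.
have : (a - a ^+ (q ^ m.+1)) * (Q m)`_(m - i) = 0.
  by rewrite mulrBl -c0 (mulrC (a ^+ _)) -c1 subrr.
move/eqP; rewrite mulf_eq0 => /orP[/eqP/subr0_eq ab|/eqP Q0].
  exists m.+1; split; last by rewrite -ab.
  by rewrite addn1 ltnS leq_subr leqnn.
have Pk : (P m)`_(m - i) = 0 by apply: frq_inj; rewrite -coef_map P_map.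
clear c0 c1 Q0.
case: i IH im Pk => [|i] IH im Pk.
  by rewrite subn0 P_monic_coef in Pk; move/eqP: Pk; rewrite oner_eq0.
have [k' [/andP[k1 k2] ek]] := IH m im Pk.
exists k'; split => //; apply/andP; split; last by rewrite ltnW.
by [].
Qed.

End Frob.
Lemma coefP (L : fieldType) q n i (a : L) : (i <= n)%N ->
  (P q a n)`_(n - i) = (-1) ^+ i * (qsym L q n i).[a].
Proof.
move=> iN.
pose ps := [seq a ^+ (q ^ j) | j <- index_iota 0 n].
have -> : P q a n = \prod_(x <- ps) ('X - x%:P) by rewrite big_map.
have := @coef_prod_XsubC _ ps (n - i).
have sz : size ps = n by rewrite size_map size_iota subn0.
rewrite sz subKn // leq_subr => /(_ isT) ->.
congr (_ * _); rewrite /qsym horner_sum; apply: eq_bigr => S _.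
rewrite hornerXn expr_sum; apply: eq_bigr => j _.
rewrite /ps (nth_map 0%N) /index_iota subn0 ?size_iota // nth_iota //.
Qed.

Theorem lemma3p9 (p e : nat) (L : closedFieldType) (n i : nat) (a : L) :
  prime p -> (0 < e)%N -> p \in [pchar L] ->
  (2 <= n)%N -> (1 <= i <= n)%N ->
  root (qsym L (p ^ e) n i) a ->
  exists k : nat, (n - i + 1 <= k <= n)%N /\ a ^+ ((p ^ e) ^ k) = a.
Proof.
move=> pp e0 pL n2 iN /rootP r0.
have hq : [pchar L].-nat (p ^ e)%N by rewrite pnatX (pnatE _ pp) pL.
apply: (key hq iN).
by rewrite coefP ?r0 ?mulr0 //; case/andP: iN.
Qed.
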